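(* For the unit-sum normalization, there is an absolute constant $c>0$ such that for every $n\ge1$, random priority on $n$ agents and $n$ items satisfies $ar(RP)\ge c/\sqrt n$.
   Context: Agents $N=\{1,\dots,n\}$, items $M=\{1,\dots,n\}$, outcomes are bijections $\mu$ ($O$ the set of outcomes). Unit-sum valuation functions: injective $u_i:M\to\mathbb R_{\ge0}$ with $\sum_{j\in M}u_i(j)=1$; $V^n$ the set of profiles. Random priority (RP) picks a uniformly random ordering of the agents and in that order gives each agent its most preferred still-unassigned item. $ar(J)=\inf_{\mathbf u\in V^n}\mathbb E[\sum_i u_i(J(\mathbf u)_i)]/\max_{\mu\in O}\sum_i u_i(\mu_i)$. *)

(* Defs.v *)
From mathcomp Require Import all_boot.
From mathcomp Require Import perm.
From Stdlib Require Import Reals.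
Set Implicit Arguments. Unset Strict Implicit. Unset Printing Implicit Defensive.
Open Scope R_scope.

(* A valuation profile: u i j = value agent i : 'I_n assigns to item j : 'I_n. *)
Definition profile (n : nat) := 'I_n -> 'I_n -> R.

Definition unit_sum (n : nat) (u : profile n) : Prop :=
  forall i : 'I_n,
    injective (u i) /\ (forall j, 0 <= u i j) /\ \big[Rplus/0]_(j : 'I_n) u i j = 1.

Definition welfare (n : nat) (u : profile n) (mu : 'I_n -> 'I_n) : R :=
  \big[Rplus/0]_(i : 'I_n) u i (mu i).

(* Optimal welfare over all outcomes (bijections agents -> items).
   Welfares are nonnegative, so 0 is a neutral start for the max. *)
Definition opt_welfare (n : nat) (u : profile n) : R :=
  \big[Rmax/0]_(mu : {perm 'I_n}) welfare u mu.

(* Most preferred element (w.r.t. f) of x0 :: s (argmax; unique if f injective). *)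
Definition best (n : nat) (f : 'I_n -> R) (x0 : 'I_n) (s : seq 'I_n) : 'I_n :=
  foldl (fun b y => if Rlt_dec (f b) (f y) then y else b) x0 s.

Fixpoint sd_aux (n : nat) (u : profile n) (order avail : seq 'I_n)
  (assign : 'I_n -> 'I_n) : 'I_n -> 'I_n :=
  match order with
  | [::] => assign
  | i :: rest =>
      match avail with
      | [::] => assign
      | j0 :: avs =>
          let j := best (u i) j0 avs in
          sd_aux u rest (rem j avail) (fun k => if k == i then j else assign k)
      end
  end.

(* Outcome of serial dictatorship for the ordering sigma
   (sigma k = agent at position k). *)
Definition serial_dictatorship (n : nat) (u : profile n) (sigma : {perm 'I_n})
  : 'I_n -> 'I_n :=
  sd_aux u [seq sigma k | k <- enum 'I_n] (enum 'I_n) (fun k => k).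

Definition RP_expected_welfare (n : nat) (u : profile n) : R :=
  (\big[Rplus/0]_(sigma : {perm 'I_n}) welfare u (serial_dictatorship u sigma))
  / INR #|{perm 'I_n}|.

(* Main.v *)
From HB Require Import structures.
Require Import Defs.
From mathcomp Require Import all_boot.
From mathcomp Require Import perm.
From Stdlib Require Import Reals Lra.
Set Implicit Arguments. Unset Strict Implicit. Unset Printing Implicit Defensive.
Open Scope R_scope.

Lemma Rplus_assoc_ssr : associative Rplus. Proof. move=> *; rewrite Rplus_assoc; reflexivity. Qed.
HB.instance Definition _ := Monoid.isComLaw.Build R 0 Rplus Rplus_assoc_ssr Rplus_comm Rplus_0_l.

Section Sums.
Variable I : finType.
Implicit Types (P : pred I) (F G : I -> R).

Lemma sumR_le P F G : (forall i, P i -> F i <= G i) ->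
  \big[Rplus/0]_(i | P i) F i <= \big[Rplus/0]_(i | P i) G i.
Proof. move=> H; apply: big_ind2 => //; [lra | move=> *; lra]. Qed.

Lemma sumR_ge0 P F : (forall i, P i -> 0 <= F i) -> 0 <= \big[Rplus/0]_(i | P i) F i.
Proof. move=> H; apply: big_ind => //; [lra | move=> *; lra]. Qed.

Lemma sumR_scal P F c : \big[Rplus/0]_(i | P i) (c * F i) = c * \big[Rplus/0]_(i | P i) F i.
Proof. apply: (big_rec2 (fun a b => a = c * b)); first lra. move=> i a b _ ->; lra. Qed.

Lemma sumR_const P c : \big[Rplus/0]_(i | P i) c = INR #|P| * c.
Proof.
rewrite big_const_seq.
have ->: count P (index_enum I) = #|P|.
  by rewrite cardE /enum_mem size_filter /index_enum unlock.
elim: #|P| => [|k IH]; first by rewrite /=; lra.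
rewrite S_INR Rmult_plus_distr_r -IH /=; lra.
Qed.

Lemma sumR_le_card P F : (forall i, P i -> F i <= 1) ->
  \big[Rplus/0]_(i | P i) F i <= INR #|P|.
Proof. move=> H; rewrite -(Rmult_1_r (INR _)) -sumR_const; exact: sumR_le. Qed.

Lemma sumR_split P F G : \big[Rplus/0]_(i | P i) (F i + G i) =
  \big[Rplus/0]_(i | P i) F i + \big[Rplus/0]_(i | P i) G i.
Proof. exact: big_split. Qed.

End Sums.
Section Perms.
Variable n : nat.
Local Notation PT := {perm 'I_n}.

Lemma sum_perm_swap (F : PT -> R) (a b : 'I_n) :
  \big[Rplus/0]_(s : PT) F s = \big[Rplus/0]_(s : PT) F (tperm a b * s)%g.
Proof. exact: (reindex_inj (mulgI (tperm a b))). Qed.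

Lemma sumR_all_const (F : 'I_n -> R) c : (forall i, F i = c) ->
  \big[Rplus/0]_(i : 'I_n) F i = INR n * c.
Proof.
move=> H; rewrite (eq_bigr (fun _ => c)) ?sumR_const ?card_ord //.
Qed.

Lemma sym1 (f : 'I_n -> R) (a : 'I_n) :
  INR n * \big[Rplus/0]_(s : PT) f (s a) = INR #|PT| * \big[Rplus/0]_(j : 'I_n) f j.
Proof.
rewrite -(sumR_all_const (F := fun b => \big[Rplus/0]_(s : PT) f (s b))); last first.
  move=> b; rewrite (sum_perm_swap _ a b); apply: eq_bigr => s _.
  by rewrite permM tpermR.
rewrite exchange_big /= -sumR_const.
apply: eq_bigr => s _; symmetry; rewrite (reindex_inj (@perm_inj _ s)) /=; reflexivity.
Qed.
End Perms.
Section Best.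
Variable n : nat.
Lemma best_cons (f : 'I_n -> R) x0 y l :
  best f x0 (y :: l) = best f (if Rlt_dec (f x0) (f y) then y else x0) l.
Proof. by []. Qed.

Lemma best_spec (f : 'I_n -> R) l : forall x0,
  best f x0 l \in x0 :: l /\ f x0 <= f (best f x0 l) /\
  (forall y, y \in l -> f y <= f (best f x0 l)).
Proof.
elim: l => [|y l IH] x0.
  rewrite /best /=; split; [by rewrite inE eqxx | split; [lra | by []]].
rewrite best_cons; set x1 := (if _ then _ else _).
have [Hm [Hx Hl]] := IH x1.
have Hx0 : f x0 <= f x1 /\ f y <= f x1.
  rewrite /x1; destruct (Rlt_dec (f x0) (f y)); simpl; split; lra.
split.
  move: Hm; rewrite !inE => /orP [/eqP ->|->]; last by rewrite !orbT.
  by rewrite /x1; destruct (Rlt_dec (f x0) (f y)); rewrite eqxx ?orbT.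
split; first lra.
move=> z; rewrite inE => /orP [/eqP ->|/Hl]; lra.
Qed.

Lemma best_mem (f : 'I_n -> R) x0 l : best f x0 l \in x0 :: l.
Proof. by have [] := best_spec f l x0. Qed.

Lemma best_max (f : 'I_n -> R) x0 l y : y \in x0 :: l -> f y <= f (best f x0 l).
Proof.
have [_ [H1 H2]] := best_spec f l x0.
rewrite inE => /orP [/eqP ->|/H2] //.
Qed.
End Best.

Section SD.
Variable n : nat.
Variable u : profile n.
Local Notation PT := {perm 'I_n}.
Local Notation state := (seq 'I_n * ('I_n -> 'I_n))%type.

Definition step (st : state) (i : 'I_n) : state :=
  match st.1 with
  | [::] => st
  | j0 :: avs => let j := best (u i) j0 avs in
      (rem j st.1, fun k => if k == i then j else st.2 k)
  end.

Lemma fold_nil o a : foldl step ([::], a) o = ([::], a).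
Proof. by elim: o. Qed.

Lemma sd_aux_fold o : forall av a, sd_aux u o av a = (foldl step (av, a) o).2.
Proof.
elim: o => [|i o IH] av a //=.
case: av => [|j0 avs] /=; first by rewrite fold_nil.
by rewrite IH.
Qed.

Lemma fold_other o : forall (st : state) a, a \notin o -> (foldl step st o).2 a = st.2 a.
Proof.
elim: o => [|i o IH] st a //=.
rewrite inE negb_or => /andP [Hai Hao].
rewrite IH //; rewrite /step; case: st.1 => //= j0 avs.
by rewrite (negbTE Hai).
Qed.

Definition ordr (s : PT) := [seq s k | k <- enum 'I_n].
Definition st (s : PT) (t : nat) : state :=
  foldl step (enum 'I_n, fun k => k) (take t (ordr s)).
Definition avail (s : PT) t := (st s t).1.
Definition pick (s : PT) (t : 'I_n) :=
  best (u (s t)) (head t (avail s t)) (behead (avail s t)).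

Lemma size_ordr (s : PT) : size (ordr s) = n.
Proof. by rewrite size_map size_enum_ord. Qed.

Lemma nth_enum (t : 'I_n) x0 : nth x0 (enum 'I_n) t = t.
Proof. apply: val_inj; by rewrite /= nth_enum_ord. Qed.

Lemma nth_ordr (s : PT) (t : 'I_n) x0 : nth x0 (ordr s) t = s t.
Proof. by rewrite /ordr (nth_map t) ?size_enum_ord // nth_enum. Qed.

Lemma st_succ (s : PT) (t : 'I_n) : st s t.+1 = step (st s t) (s t).
Proof.
by rewrite /st (take_nth (s t)) ?size_ordr // foldl_rcons nth_ordr.
Qed.

Lemma avail_size (s : PT) (t : nat) : (t <= n)%nat -> size (avail s t) = (n - t)%nat /\ uniq (avail s t).
Proof.
elim: t => [|t IH] Ht.
  by rewrite /avail /st take0 /= size_enum_ord subn0 enum_uniq.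
have Htn : (t < n)%nat by [].
have [Hs Hu] := IH (ltnW Ht).
rewrite /avail (st_succ s (Ordinal Htn)) /step /= -/(avail s t).
move: Hs Hu.
case E: (avail s t) => [|j0 avs] Hs Hu.
  by move: Htn; rewrite -subn_gt0 -Hs.
cbn -[rem best].
rewrite size_rem ?best_mem // Hs rem_uniq // subnS //.
Qed.

Lemma avail_succ (s : PT) (t : 'I_n) :
  avail s t.+1 = rem (pick s t) (avail s t) /\ (st s t.+1).2 (s t) = pick s t.
Proof.
have [Hs _] := avail_size s (ltnW (ltn_ord t)).
rewrite /avail st_succ /step /pick -/(avail s t).
move: Hs; case: (avail s t) => [|j0 avs] /= Hs.
  by move: Hs; move/eqP; rewrite eq_sym subn_eq0 leqNgt ltn_ord.
by rewrite eqxx.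
Qed.

Lemma pick_max (s : PT) (t : 'I_n) y : y \in avail s t -> u (s t) y <= u (s t) (pick s t).
Proof.
rewrite /pick; case: (avail s t) => [|j0 avs] //= H.
exact: best_max.
Qed.

Lemma mem_take_enum (k : 'I_n) (t : nat) : k \in take t (enum 'I_n) -> (k < t)%nat.
Proof.
move=> H; have : val k \in map val (take t (enum 'I_n)) by apply: map_f.
by rewrite map_take val_enum_ord take_iota mem_iota add0n leq_min => /andP [_ /andP [? _]].
Qed.

Lemma mem_drop_enum (k : 'I_n) (t : nat) : k \in drop t (enum 'I_n) -> (t <= k)%nat.
Proof.
move=> H; have : val k \in map val (drop t (enum 'I_n)) by apply: map_f.
by rewrite map_drop val_enum_ord drop_iota mem_iota add0n => /andP [].
Qed.

Lemma sd_final (s : PT) (t : 'I_n) : serial_dictatorship u s (s t) = pick s t.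
Proof.
rewrite /serial_dictatorship sd_aux_fold -/(ordr s).
rewrite -(cat_take_drop t.+1 (ordr s)) foldl_cat -/(st s t.+1).
rewrite fold_other; first by case: (avail_succ s t).
rewrite /ordr -map_drop mem_map; last exact: perm_inj.
by apply/negP => /mem_drop_enum; rewrite ltnn.
Qed.

Lemma welfare_sd (s : PT) :
  welfare u (serial_dictatorship u s) = \big[Rplus/0]_(t : 'I_n) u (s t) (pick s t).
Proof.
rewrite /welfare (reindex_inj (@perm_inj _ s)) /=.
by apply: eq_bigr => t _; rewrite sd_final.
Qed.

Lemma take_ordr (s : PT) t : take t (ordr s) = map s (take t (enum 'I_n)).
Proof. by rewrite /ordr map_take. Qed.

Lemma avail_swap (s : PT) (t : nat) (a b : 'I_n) : (t <= a)%nat -> (t <= b)%nat ->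
  avail (tperm a b * s)%g t = avail s t.
Proof.
move=> Ha Hb; rewrite /avail /st !take_ordr.
congr (foldl _ _ _).1; apply/eq_in_map => k Hk0; have Hk := mem_take_enum Hk0.
rewrite permM tpermD //; apply/eqP => E; subst; rewrite ltnNge in Hk.
  by rewrite Ha in Hk.
by rewrite Hb in Hk.
Qed.

End SD.
Lemma sub_of_add (a b c : nat) : (a + b)%nat = c -> b = (c - a)%nat.
Proof. by move=> <-; rewrite addKn. Qed.

Lemma card_ord_lt (n t : nat) : (t <= n)%nat -> #|[pred b : 'I_n | (b < t)%nat]| = t.
Proof.
move=> Ht; rewrite cardE /enum_mem size_filter -enumT.
have -> : count (mem [pred b : 'I_n | (b < t)%nat]) (enum 'I_n) =
          count (fun m => (m < t)%nat) (map val (enum 'I_n)) by rewrite count_map.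
rewrite val_enum_ord -(subnKC Ht) iotaD count_cat add0n.
rewrite (@eq_in_count _ _ predT) ?count_predT ?size_iota; last first.
  by move=> m; rewrite mem_iota add0n.
rewrite (@eq_in_count _ _ pred0) ?count_pred0 ?addn0 //.
by move=> m; rewrite mem_iota /= => /andP [H _]; rewrite ltnNge H.
Qed.

Lemma card_ord_ge (n t : nat) : (t <= n)%nat -> #|[pred b : 'I_n | (t <= b)%nat]| = (n - t)%nat.
Proof.
move=> Ht; have := cardC [pred b : 'I_n | (b < t)%nat].
rewrite card_ord_lt // card_ord => H.
have -> : #|[pred b : 'I_n | (t <= b)%nat]| = #|[predC [pred b : 'I_n | (b < t)%nat]]|.
  by apply: eq_card => b; rewrite !inE leqNgt.
exact: sub_of_add.
Qed.

Lemma card_notin (n : nat) (A : seq 'I_n) : uniq A -> #|[pred j : 'I_n | j \notin A]| = (n - size A)%nat.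
Proof.
move=> HA; have := cardC (mem A); rewrite card_ord (card_uniqP HA) => H.
rewrite -(sub_of_add H); apply: eq_card => j; by rewrite !inE.
Qed.
Section Main.
Variable n : nat.
Variable u : profile n.
Hypothesis Hu : unit_sum u.
Local Notation PT := {perm 'I_n}.
Local Notation Pc := (INR #|{perm 'I_n}|).

Lemma u_ge0 i j : 0 <= u i j.
Proof. by have [_ [H _]] := Hu i. Qed.

Lemma u_le1 i j : u i j <= 1.
Proof.
have [_ [H1 H2]] := Hu i.
rewrite -H2 (bigD1 j) //=.
match goal with |- context [Rplus _ ?S] => have : 0 <= S by apply: sumR_ge0 => k _; exact: u_ge0 end.
lra.
Qed.

Section PartB.
Variable mu : PT.
Local Notation W := (welfare u mu).

Definition G (s : PT) (t : 'I_n) (i : 'I_n) :=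
  if mu i \in avail u s t then u i (mu i) else 0.

Lemma G_ge0 (s : PT) (t : 'I_n) i : 0 <= G s t i.
Proof. rewrite /G; case: ifP => _; [exact: u_ge0 | lra]. Qed.

Lemma G_le1 (s : PT) (t : 'I_n) i : G s t i <= 1.
Proof. rewrite /G; case: ifP => _; [exact: u_le1 | lra]. Qed.

Lemma B1 (s : PT) (t : 'I_n) : G s t (s t) <= u (s t) (pick u s t).
Proof. rewrite /G; case: ifP => H; [exact: pick_max | exact: u_ge0]. Qed.

Lemma B2 (t b : 'I_n) : (t <= b)%nat ->
  \big[Rplus/0]_(s : PT) G s t (s t) = \big[Rplus/0]_(s : PT) G s t (s b).
Proof.
move=> Htb; rewrite (sum_perm_swap _ t b); apply: eq_bigr => s _.
by rewrite /G avail_swap // permM tpermL.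
Qed.

Lemma B3 (s : PT) (t : 'I_n) :
  W - 2 * INR t <= \big[Rplus/0]_(b : 'I_n | (t <= b)%nat) G s t (s b).
Proof.
have [Hsz Huq] := avail_size u s (ltnW (ltn_ord t)).
set A := avail u s t in Hsz Huq.
have E1 : \big[Rplus/0]_(b : 'I_n) G s t (s b) = \big[Rplus/0]_(i : 'I_n) G s t i.
  by symmetry; rewrite (reindex_inj (@perm_inj _ s)).
have E2 : W - INR t <= \big[Rplus/0]_(i : 'I_n) G s t i.
  have E3 : W = \big[Rplus/0]_(i : 'I_n) G s t i + \big[Rplus/0]_(i : 'I_n) (u i (mu i) - G s t i).
    by rewrite /welfare -sumR_split; apply: eq_bigr => i _; ring.
  rewrite E3.
  suff : \big[Rplus/0]_(i : 'I_n) (u i (mu i) - G s t i) <= INR t by lra.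
  apply: Rle_trans (_ : \big[Rplus/0]_(i : 'I_n) (if mu i \notin A then 1 else 0) <= _).
    apply: sumR_le => i _; rewrite /G -/A; case: ifP => /= _; first lra.
    have := u_le1 i (mu i); lra.
  rewrite -big_mkcond /= (reindex_inj (@perm_inj _ (mu^-1)%g)) /=.
  under eq_bigl => j do rewrite permKV.
  rewrite sumR_const Rmult_1_r.
  have -> : #|[pred j : 'I_n | j \notin A]| = t.
    by rewrite card_notin // Hsz subKn // ltnW.
  apply: Rle_refl.
have E4 : \big[Rplus/0]_(b : 'I_n) G s t (s b) =
  \big[Rplus/0]_(b : 'I_n | (t <= b)%nat) G s t (s b) +
  \big[Rplus/0]_(b : 'I_n | ~~ (t <= b)%nat) G s t (s b).
  by rewrite (bigID (fun b : 'I_n => (t <= b)%nat)).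
have E5 : \big[Rplus/0]_(b : 'I_n | ~~ (t <= b)%nat) G s t (s b) <= INR t.
  apply: Rle_trans; first by apply: sumR_le_card => b _; exact: G_le1.
  have -> : #|(fun b : 'I_n => ~~ (t <= b)%nat)| = #|[pred b : 'I_n | (b < t)%nat]|.
    by apply: eq_card => b; rewrite !inE ltnNge.
  rewrite card_ord_lt; [apply: Rle_refl | exact: ltnW].
lra.
Qed.

Lemma B4 (t : 'I_n) :
  Pc * (W - 2 * INR t) <= INR (n - t) * \big[Rplus/0]_(s : PT) G s t (s t).
Proof.
have -> : Pc * (W - 2 * INR t) = \big[Rplus/0]_(s : PT) (W - 2 * INR t).
  by rewrite sumR_const.
have -> : INR (n - t) * \big[Rplus/0]_(s : PT) G s t (s t) =
   \big[Rplus/0]_(b : 'I_n | (t <= b)%nat) \big[Rplus/0]_(s : PT) G s t (s b).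
  rewrite (eq_bigr (fun b : 'I_n => \big[Rplus/0]_(s : PT) G s t (s t))); last first.
    by move=> b Hb; rewrite (B2 Hb).
  rewrite sumR_const; congr (INR _ * _).
  by rewrite -(card_ord_ge (ltnW (ltn_ord t))).
rewrite exchange_big /=.
apply: sumR_le => s _; exact: B3.
Qed.

Lemma partB (t : 'I_n) :
  Pc * (W - 2 * INR t) <= INR n * \big[Rplus/0]_(s : PT) u (s t) (pick u s t).
Proof.
apply: Rle_trans (B4 t) _.
apply: Rmult_le_compat.
- exact: pos_INR.
- by apply: sumR_ge0 => s _; exact: G_ge0.
- by apply: le_INR; apply/leP; exact: leq_subr.
- by apply: sumR_le => s _; exact: B1.
Qed.

End PartB.
Section PartA.
Variable x0 : 'I_n.

Definition ge_rel (i : 'I_n) : rel 'I_n :=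
  fun a b => if Rle_dec (u i b) (u i a) then true else false.

Lemma ge_relP i a b : ge_rel i a b -> u i b <= u i a.
Proof. by rewrite /ge_rel; case: Rle_dec. Qed.

Lemma ge_rel_total i : total (ge_rel i).
Proof.
move=> a b; rewrite /ge_rel.
case: (Rle_dec (u i b) (u i a)) => //= H1.
case: (Rle_dec (u i a) (u i b)) => //= H2; lra.
Qed.

Lemma ge_rel_trans i : transitive (ge_rel i).
Proof.
move=> b a c /ge_relP H1 /ge_relP H2; rewrite /ge_rel.
case: Rle_dec => //= H; lra.
Qed.

Lemma ge_rel_refl i : reflexive (ge_rel i).
Proof. move=> a; rewrite /ge_rel; case: Rle_dec => //= H; lra. Qed.

Definition srt i := sort (ge_rel i) (enum 'I_n).
Definition v i (k : 'I_n) := u i (nth x0 (srt i) k).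

Lemma size_srt i : size (srt i) = n.
Proof. by rewrite /srt size_sort size_enum_ord. Qed.

Lemma uniq_srt i : uniq (srt i).
Proof. by rewrite /srt sort_uniq enum_uniq. Qed.

Lemma v_sum i : \big[Rplus/0]_(k : 'I_n) v i k = 1.
Proof.
have [_ [_ H]] := Hu i; rewrite -H.
have -> : \big[Rplus/0]_(j : 'I_n) u i j = \big[Rplus/0]_(j <- enum 'I_n) u i j.
  by rewrite big_enum.
rewrite -(perm_big _ (permEl (perm_sort (ge_rel i) (enum 'I_n)))) -/(srt i).
rewrite [in RHS](big_nth x0) size_srt big_mkord.
by [].
Qed.

Lemma pigeon i (A : seq 'I_n) (t : 'I_n) : uniq A -> size A = (n - t)%nat ->
  exists m, (m <= t)%nat /\ nth x0 (srt i) m \in A.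
Proof.
move=> HA Hs.
case: (boolP (has (fun m => nth x0 (srt i) m \in A) (iota 0 t.+1))).
  move/hasP => [m Hm HmA]; exists m; split => //.
  by move: Hm; rewrite mem_iota add0n.
move/hasPn => H; exfalso.
have Hsub : {subset take t.+1 (srt i) <= enum [pred j : 'I_n | j \notin A]}.
  move=> x Hx; rewrite mem_enum inE.
  have Hidx : (index x (take t.+1 (srt i)) < t.+1)%nat.
    apply: leq_trans (_ : (_ < size (take t.+1 (srt i)))%nat) _.
      by rewrite index_mem.
    by rewrite size_take; case: ltnP.
  have := H (index x (take t.+1 (srt i))); rewrite mem_iota add0n Hidx => /(_ isT).
  by rewrite -(nth_take x0 Hidx) nth_index.
have := uniq_leq_size (take_uniq t.+1 (uniq_srt i)) Hsub.
rewrite -cardE card_notin // Hs subKn; last exact: ltnW.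
rewrite size_take size_srt; case: ltnP => _; by rewrite ?ltnn // leqNgt ltn_ord.
Qed.

Lemma A1 (s : PT) (t : 'I_n) : v (s t) t <= u (s t) (pick u s t).
Proof.
have [Hs Huq] := avail_size u s (ltnW (ltn_ord t)).
have [m [Hm HmA]] := pigeon (s t) Huq Hs.
apply: Rle_trans (pick_max HmA).
apply: ge_relP.
have := sorted_leq_nth (@ge_rel_trans (s t)) (@ge_rel_refl (s t)) x0 (sort_sorted (@ge_rel_total (s t)) (enum 'I_n)).
move=> /(_ m t); apply.
- by rewrite inE -/(srt _) size_srt; apply: leq_ltn_trans Hm _.
- by rewrite inE -/(srt _) size_srt.
- exact: Hm.
Qed.

Lemma partA : Pc * INR n <=
  INR n * \big[Rplus/0]_(s : PT) welfare u (serial_dictatorship u s).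
Proof.
rewrite (eq_bigr (fun s : PT => \big[Rplus/0]_(t : 'I_n) u (s t) (pick u s t))); last first.
  by move=> s _; rewrite welfare_sd.
rewrite exchange_big /= -sumR_scal.
apply: Rle_trans (_ : Pc * \big[Rplus/0]_(i : 'I_n) \big[Rplus/0]_(t : 'I_n) v i t <= _).
  rewrite (eq_bigr (fun _ => 1)); last by move=> i _; exact: v_sum.
  rewrite sumR_const card_ord; apply: Req_le; ring.
rewrite exchange_big /= -sumR_scal.
apply: sumR_le => t _.
rewrite -(sym1 (fun i => v i t) t).
apply: Rmult_le_compat_l; first exact: pos_INR.
by apply: sumR_le => s _; apply: A1.
Qed.

End PartA.
End Main.
From Stdlib Require Import ZArith.

Lemma nat_ceil (r : R) : 0 <= r -> exists K : nat, r < INR K /\ INR K <= r + 1.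
Proof.
move=> Hr; have [H1 H2] := archimed r.
have Hz : (0 <= up r)%Z.
  apply: Z.lt_le_incl; apply: lt_IZR; rewrite /=; lra.
exists (Z.to_nat (up r)); rewrite INR_IZR_INZ Z2Nat.id //; lra.
Qed.

Lemma bigmax_ge (T : eqType) (F : T -> R) (r : seq T) x :
  x \in r -> F x <= \big[Rmax/0]_(i <- r) F i.
Proof.
elim: r => [|y r IH] //; rewrite big_cons inE /= => /orP [/eqP ->|/IH H].
  exact: Rmax_l.
apply: Rle_trans H (Rmax_r _ _).
Qed.

Section Final.
Variable n : nat.
Variable u : profile n.
Hypothesis Hu : unit_sum u.
Local Notation PT := {perm 'I_n}.
Local Notation Pc := (INR #|{perm 'I_n}|).

Lemma Pc_gt0 : 0 < Pc.
Proof.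
apply: lt_0_INR; apply/ltP; apply/card_gt0P; by exists 1%g.
Qed.

Lemma opt_ge (mu : PT) : welfare u mu <= opt_welfare u.
Proof. exact: (bigmax_ge (fun m : PT => welfare u m) (mem_index_enum mu)). Qed.

Lemma opt_cases : opt_welfare u = 0 \/ exists mu : PT, opt_welfare u = welfare u mu.
Proof.
rewrite /opt_welfare; apply: (big_ind (fun x => x = 0 \/ exists mu : PT, x = welfare u mu)); first by left.
  move=> x y Hx Hy; exact: (@Rmax_case x y (fun z => z = 0 \/ exists mu : PT, z = welfare u mu)).
by move=> mu _; right; exists mu.
Qed.

Lemma welfare_le (mu : 'I_n -> 'I_n) : welfare u mu <= INR n.
Proof.
rewrite /welfare; apply: Rle_trans; first by apply: sumR_le_card => i _; exact: u_le1.
by rewrite card_ord; apply: Rle_refl.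
Qed.

Lemma sum_welfare : (0 < n)%nat -> \big[Rplus/0]_(mu : PT) welfare u mu = Pc.
Proof.
move=> Hn0; have Hn : 0 < INR n by apply: lt_0_INR; apply/ltP.
  apply: (Rmult_eq_reg_l (INR n)); last lra.
  rewrite /welfare (eq_bigr (fun mu : PT => \big[Rplus/0]_(i : 'I_n) u i (mu i))) //.
  rewrite exchange_big /= -sumR_scal.
  rewrite (eq_bigr (fun i => Pc)); first by rewrite sumR_const card_ord; ring.
  move=> i _; rewrite sym1; have [_ [_ ->]] := Hu i; ring.
Qed.

Lemma opt_bounds : (0 < n)%nat -> exists mu : PT,
  opt_welfare u = welfare u mu /\ 1 <= welfare u mu /\ welfare u mu <= INR n.
Proof.
move=> Hn0.
have H1 : 1 <= opt_welfare u.
  have Hs := sum_welfare Hn0.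
  have : \big[Rplus/0]_(mu : PT) welfare u mu <= \big[Rplus/0]_(mu : PT) opt_welfare u.
    by apply: sumR_le => mu _; apply: opt_ge.
  rewrite Hs sumR_const.
  have -> : #|(fun _ : PT => true)| = #|PT| by apply: eq_card.
  move=> H.
  have HP := Pc_gt0.
  apply: (Rmult_le_reg_l Pc) => //; lra.
case: opt_cases => [H0|[mu Hmu]]; first lra.
exists mu; split => //; split; first by rewrite -Hmu.
exact: welfare_le.
Qed.

Local Notation S := (\big[Rplus/0]_(s : PT) welfare u (serial_dictatorship u s)).

Lemma partB_sum (mu : PT) (K : nat) : (K <= n)%nat -> 4 * (INR K - 1) <= welfare u mu ->
  Pc * welfare u mu / 2 * INR K <= INR n * S.
Proof.
move=> HK HW.
set W := welfare u mu.
have HP := Pc_gt0.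
have E : INR n * S = \big[Rplus/0]_(t : 'I_n)
      (INR n * \big[Rplus/0]_(s : PT) u (s t) (pick u s t)).
  rewrite sumR_scal; congr (_ * _).
  rewrite (eq_bigr (fun s : PT => \big[Rplus/0]_(t : 'I_n) u (s t) (pick u s t))); last first.
    by move=> s _; rewrite welfare_sd.
  by rewrite exchange_big.
rewrite E (bigID (fun t : 'I_n => (t < K)%nat)) /=.
set S2 := \big[Rplus/0]_(i : 'I_n | ~~ (i < K)%nat) _.
have HS2 : 0 <= S2.
  apply: sumR_ge0 => t _; apply: Rmult_le_pos; first exact: pos_INR.
  by apply: sumR_ge0 => s _; exact: u_ge0.
apply: Rle_trans _ (Rplus_le_compat_l _ 0 S2 HS2); rewrite Rplus_0_r.
apply: Rle_trans (_ : \big[Rplus/0]_(i : 'I_n | (i < K)%nat) (Pc * W / 2) <= _).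
  rewrite sumR_const.
  have -> : #|(fun i : 'I_n => (i < K)%nat)| = K.
    by rewrite -[RHS](card_ord_lt HK); apply: eq_card.
  apply: Req_le; ring.
apply: sumR_le => t Ht.
apply: Rle_trans (partB Hu mu t).
have Ht' : INR t + 1 <= INR K by rewrite -S_INR; apply: le_INR; apply/leP.
have Hx : welfare u mu / 2 <= welfare u mu - 2 * INR t by lra.
apply: (Rle_trans _ (Pc * (welfare u mu / 2))).
  by apply: Req_le; rewrite /W; field.
by apply: Rmult_le_compat_l; lra.
Qed.

End Final.

Theorem lemma7 :
  exists c : R, 0 < c /\
    forall (n : nat), leq 1 n ->
    forall u : profile n, unit_sum u ->
      c / sqrt (INR n) <= RP_expected_welfare u / opt_welfare u.
Proof.
exists (1/8); split; first lra.
move=> n Hn u Hu.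
have HP := Pc_gt0 n.
have [mu [Hopt [HW1 HWn]]] := opt_bounds Hu Hn.
set W := welfare u mu in Hopt HW1 HWn.
set S := \big[Rplus/0]_(s : {perm 'I_n}) welfare u (serial_dictatorship u s).
have HnR : 0 < INR n by apply: lt_0_INR; apply/ltP.
have HA : INR #|{perm 'I_n}| <= S.
  have := partA Hu (Ordinal Hn); rewrite -/S => H.
  apply: (Rmult_le_reg_l (INR n)) => //; lra.
have [K [HK1 HK2]] := nat_ceil (r := W / 4) ltac:(lra).
have HKn : (K <= n)%nat.
  have : INR K < INR n.+1 by rewrite S_INR; lra.
  by move/INR_lt/ltP.
have HW4 : 4 * (INR K - 1) <= welfare u mu by rewrite -/W; lra.
have HB := partB_sum Hu HKn HW4.
rewrite -/S in HB.
rewrite /RP_expected_welfare -/S Hopt.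
set r := sqrt (INR n).
have Hr : 0 < r by apply: sqrt_lt_R0.
have Hrr : r * r = INR n by apply: sqrt_sqrt; lra.
set P := INR #|{perm 'I_n}| in HP HA HB *.
set R0 := S / P.
have HR1 : 1 <= R0.
  rewrite /R0; apply: (Rmult_le_reg_r P) => //.
  rewrite /Rdiv Rmult_assoc Rinv_l; lra.
have HR2 : W * W / 8 <= INR n * R0.
  rewrite /R0; apply: (Rmult_le_reg_r P) => //.
  have -> : INR n * (S / P) * P = INR n * S by field; lra.
  have : W * W / 8 * P <= P * W / 2 * INR K.
    have : W / 4 * (P * W / 2) <= INR K * (P * W / 2).
      apply: Rmult_le_compat_r; [apply: Rmult_le_pos; [apply: Rmult_le_pos|]; lra | lra].
    lra.
  move: HB; rewrite -/W; lra.
have Hkey : W <= 8 * r * R0.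
  case: (Rle_lt_dec W r) => Hc; first nra.
  rewrite -Hrr in HR2.
  have : W * r <= 8 * r * r * R0 by nra.
  move=> H; apply: (Rmult_le_reg_r r) => //; nra.
have HWp : 0 < W by lra.
apply: (Rmult_le_reg_r (r * W)); first nra.
have -> : 1 / 8 / r * (r * W) = W / 8 by field; lra.
have -> : R0 / W * (r * W) = r * R0 by field; lra.
lra.
Qed.
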